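(* Let $V\subset\mathbb{R}^d$ be a finite non-degenerate antichain and $k\ge 0$. A generated point $p\in S_V$ is a characteristic point of rank $k$ if and only if there is a partition $D_p=P_1\cup\dots\cup P_{k+1}$ into nonempty parts such that a subset $G\subseteq D_p$ is a minimal generating set for $p$ if and only if $|G\cap P_i|=1$ for all $i=1,\dots,k+1$. Moreover, in this case two minima $u,w\in D_p$ lie in the same part iff $T_p(u)=T_p(w)$.
   Context: For $x,y\in\mathbb{R}^d$, $x\le y$ (dominance order) means $x_i\le y_i$ for all $i$; $y\rhd x$ means $y_i>x_i$ for all $i$; $y\rhd_i x$ means $y_i=x_i$ and $y_j>x_j$ for all $j\neq i$. The join is the componentwise maximum. $V\subset\mathbb{R}^d$ is a finite antichain in the dominance order (elements are called minima). The orthogonal surface $S_V$ is the topological boundary of $\langle V\rangle=\{x: x\ge v\text{ for some }v\in V\}$; equivalently $p\in S_V$ iff there is $v\in V$ with $v\le p$ and no $w\in V$ with $p\rhd w$. For $p\in S_V$, $D_p=\{v\in V:v\le p\}$ and for $v\in D_p$, $T_p(v)=\{i: p_i=v_i\}$. A generated point is a point $p\in S_V$ equal to $\bigvee G$ for some nonempty $G\subseteq V$; such $G$ is a generating set for $p$, minimal if $\bigvee(G\setminus\{v\})\neq p$ for every $v\in G$. Flats: $U_i(v)=\{p\in S_V: p\rhd_i v\}$; for $v,w\in V$ put $v\sim_i w$ iff $U_i(v)\cap U_i(w)\neq\emptyset$, and let $\sim_i^c$ be the reflexive–transitive closure; the $i$-flat of $v$ is $F_i(v)=\overline{\bigcup_{w\sim_i^c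 v}U_i(w)}$, and an $i$-flat is any set of this form. A characteristic point is a point of $S_V$ that lies in some $i$-flat for every $i\in\{1,\dots,d\}$. $V$ is degenerate if there exist a characteristic point $p$, minima $x,u,v\in D_p$ and coordinates $i\neq j$ with $u_i<v_i=x_i=p_i$ and $v_j<u_j=x_j=p_j$; otherwise non-degenerate. For non-degenerate $V$ all minimal generating sets of a characteristic point have the same cardinality, and the rank of a characteristic point is this cardinality minus one. *)

(* Defs.v *)
From HB Require Import structures.
From mathcomp Require Import all_boot all_order all_algebra.
From mathcomp Require Import all_classical all_reals topology normedtype.
From Stdlib Require Import Relations.
Import numFieldTopology.Exports.
Set Implicit Arguments. Unset Strict Implicit. Unset Printing Implicit Defensive.
Import Order.TTheory GRing.Theory Num.Theory.
Local Open Scope classical_set_scope.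
Local Open Scope ring_scope.

Section OrthSurf.
Variables (R : realType) (d : nat).
Local Notation pt := 'rV[R]_d.
Definition coord (x : pt) (i : 'I_d) : R := x ord0 i.

Definition dle (x y : pt) : Prop := forall i, coord x i <= coord y i.
Definition sdom (y x : pt) : Prop := forall i, coord x i < coord y i.
Definition sdom_i (i : 'I_d) (y x : pt) : Prop :=
  coord y i = coord x i /\ forall j, j != i -> coord x j < coord y j.

Definition antichain (V : set pt) : Prop :=
  forall v w, V v -> V w -> dle v w -> v = w.

Definition surface (V : set pt) (p : pt) : Prop :=
  (exists2 v, V v & dle v p) /\ ~ (exists2 w, V w & sdom p w).

Definition Dset (V : set pt) (p : pt) : set pt := [set v | V v /\ dle v p].

Definition Tset (p v : pt) : set 'I_d := [set i | coord p i = coord v i].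

Definition is_join (G : set pt) (p : pt) : Prop :=
  G !=set0 /\ forall i, (forall v, G v -> coord v i <= coord p i) /\ (exists2 v, G v & coord v i = coord p i).

Definition generated (V : set pt) (p : pt) : Prop :=
  surface V p /\ exists2 G, G `<=` V & is_join G p.

Definition min_gen (G : set pt) (p : pt) : Prop :=
  is_join G p /\ forall v, G v -> ~ is_join (G `\ v) p.

Definition Uflat (V : set pt) (i : 'I_d) (v : pt) : set pt :=
  [set p | surface V p /\ sdom_i i p v].

Definition sim_i (V : set pt) (i : 'I_d) (v w : pt) : Prop :=
  V v /\ V w /\ (Uflat V i v `&` Uflat V i w) !=set0.

Definition Fflat (V : set pt) (i : 'I_d) (v : pt) : set pt :=
  closure (\bigcup_(w in [set w | clos_refl_trans pt (sim_i V i) v w]) Uflat V i w).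

Definition is_flat (V : set pt) (i : 'I_d) (F : set pt) : Prop :=
  exists2 v, V v & F = Fflat V i v.

Definition characteristic (V : set pt) (p : pt) : Prop :=
  surface V p /\ forall i, exists2 F, is_flat V i F & F p.

Definition degenerate (V : set pt) : Prop :=
  exists p x u v i j, [/\ characteristic V p, Dset V p x, Dset V p u, Dset V p v
    & [/\ i != j,
       coord u i < coord v i /\ coord v i = coord x i /\ coord x i = coord p i
     & coord v j < coord u j /\ coord u j = coord x j /\ coord x j = coord p j]].

Definition char_rank (V : set pt) (p : pt) (k : nat) : Prop :=
  characteristic V p /\
  (exists G, G `<=` V /\ min_gen G p) /\
  (forall G, G `<=` V -> min_gen G p -> (G #= `I_k.+1)%card).

Definition partition_of (D : set pt) (k : nat) (P : 'I_k.+1 -> set pt) : Prop :=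
  [/\ forall l, P l !=set0,
      forall l m, l != m -> P l `&` P m = set0
    & \bigcup_(l in [set: 'I_k.+1]) P l = D].

Definition gen_partition (V : set pt) (p : pt) (k : nat) (P : 'I_k.+1 -> set pt) : Prop :=
  partition_of (Dset V p) P /\
  forall G, G `<=` Dset V p ->
    (min_gen G p <-> forall l, exists u, G `&` P l = [set u]).

End OrthSurf.

(* Main.v *)
From Pilot Require Import Defs.
From mathcomp Require Import all_boot all_order all_algebra.
From mathcomp Require Import all_classical all_reals topology normedtype.
From mathcomp Require Import lra.
From Stdlib Require Import Relations.
Import numFieldTopology.Exports.
Import Order.TTheory GRing.Theory Num.Theory.
Local Open Scope classical_set_scope.
Local Open Scope ring_scope.
Local Notation coord := Pilot.Defs.coord.
Definition Transv {T : Type} (D : set T) (E : T -> T -> Prop) (G : set T) :=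
  forall y, D y -> (exists g, G g /\ E y g) /\
    (forall g g', G g -> G g' -> E y g -> E y g' -> g = g').

Lemma transv_build {T : choiceType} (D : set T) (E : T -> T -> Prop)
  (Er : forall x, D x -> E x x) (Es : forall x y, E x y -> E y x)
  (Et : forall x y z, E x y -> E y z -> E x z) u w :
  D u -> D w -> exists G, [/\ G `<=` D, G u, (~ E u w -> G w) & Transv D E G].
Proof.
move=> Du Dw.
pose r x := if `[< E x u >] then u else if `[< E x w >] then w
            else xget u [set y | D y /\ E x y].
have rcl : forall a b, E a b -> r a = r b.
  move=> a b Eab; rewrite /r.
  have -> : E a u = E b u.
    by apply/propext; split=> H; [apply: Et (Es _ _ Eab) H|apply: Et Eab H].
  have -> : E a w = E b w.
    by apply/propext; split=> H; [apply: Et (Es _ _ Eab) H|apply: Et Eab H].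
  have -> : [set y | D y /\ E a y] = [set y | D y /\ E b y]; last by [].
  apply/funext=> y; apply/propext; split=> -[Dy H]; split=> //.
    exact: Et (Es _ _ Eab) H.
  exact: Et Eab H.
have rP : forall y, D y -> [/\ D (r y), E y (r y) & r (r y) = r y].
  move=> y Dy.
  have [Eyu|nEyu] := pselect (E y u).
    have ry : r y = u by rewrite /r asboolT.
    split; rewrite ry //; rewrite -{2}ry; apply: rcl; exact: Es.
  have [Eyw|nEyw] := pselect (E y w).
    have ry : r y = w by rewrite /r asboolF // asboolT.
    split; rewrite ry //; rewrite -{2}ry; apply: rcl; exact: Es.
  have ry : r y = xget u [set z | D z /\ E y z] by rewrite /r asboolF // asboolF.
  have : [set z | D z /\ E y z] (xget u [set z | D z /\ E y z]).
    by apply: xgetPex; exists y; split=> //; apply: Er.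
  rewrite -ry => -[Dg Eg]; split=> //; apply: rcl; exact: Es.
exists [set g | D g /\ r g = g]; split.
- by move=> g [].
- by split=> //; rewrite /r asboolT //; apply: Er.
- move=> nEuw; split=> //; rewrite /r asboolF; last by move=> /Es.
  by rewrite asboolT //; apply: Er.
- move=> y Dy; split.
    have [D1 E1 r1] := rP y Dy; exists (r y); split=> //.
  move=> g g' [Dg rg] [Dg' rg'] Eg Eg'.
  rewrite -rg -rg'; apply: rcl; exact: Et (Es _ _ Eg) Eg'.
Qed.

Lemma same_class {T : choiceType} (D : set T) (E1 E2 : T -> T -> Prop)
  (Er : forall x, D x -> E2 x x) (Es : forall x y, E2 x y -> E2 y x)
  (Et : forall x y z, E2 x y -> E2 y z -> E2 x z)
  (E1r : forall x, D x -> E1 x x) :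
  (forall G, G `<=` D -> Transv D E2 G -> Transv D E1 G) ->
  forall u w, D u -> D w -> E1 u w -> E2 u w.
Proof.
move=> H u w Du Dw E1uw; apply/not_notP => nE.
have [G [GD Gu Gw TG]] := @transv_build _ D E2 Er Es Et u w Du Dw.
have [_ U] := H G GD TG u Du.
have uw := U u w Gu (Gw nE) (E1r u Du) E1uw.
by apply: nE; rewrite -uw; apply: Er.
Qed.
Lemma joinE {R : realType} {d : nat} (V : set 'rV[R]_d) (p : 'rV[R]_d) G :
  G `<=` Dset V p ->
  (is_join G p <-> G !=set0 /\ forall i, exists2 v, G v & coord v i = coord p i).
Proof.
move=> GD; split.
  move=> [Gn H]; split=> // i.
  by have [_ [v Gv e]] := H i; exists v.
move=> [Gn H]; split=> // i; split; last exact: H i.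
move=> v Gv; have [_ le] := GD v Gv; exact: le i.
Qed.

Lemma Tne {R : realType} {d : nat} (V : set 'rV[R]_d) (p v : 'rV[R]_d) :
  surface V p -> Dset V p v -> exists i, Tset p v i.
Proof.
move=> [_ ns] [Vv le]; apply/not_notP => nT; apply: ns; exists v => // i.
have := le i; rewrite le_eqVlt => /orP[/eqP e|//].
by exfalso; apply: nT; exists i; rewrite /Tset /= e.
Qed.

Definition Ch {R : realType} {d : nat} (V : set 'rV[R]_d) (p : 'rV[R]_d) :=
  forall i, exists x, [/\ Dset V p x, Tset p x i &
     forall u, Dset V p u -> Tset p u `<=` Tset p x -> Tset p u i].

Definition ND {R : realType} {d : nat} (V : set 'rV[R]_d) (p : 'rV[R]_d) :=
  forall x u v i j, Dset V p x -> Dset V p u -> Dset V p v ->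
    Tset p v i -> Tset p x i -> ~ Tset p u i ->
    Tset p u j -> Tset p x j -> ~ Tset p v j -> False.

Lemma ND_of {R : realType} {d : nat} (V : set 'rV[R]_d) (p : 'rV[R]_d) :
  characteristic V p -> ~ degenerate V -> ND V p.
Proof.
move=> ch nd x u v i j Dx Du Dv vi xi ui uj xj vj; apply: nd.
rewrite /Tset /= in vi xi ui uj xj vj.
exists p, x, u, v, i, j; split=> //; split.
- by apply/eqP => ij; apply: ui; rewrite ij.
- split; last by split; [rewrite -vi -xi|rewrite -xi].
  have := Du.2 i; rewrite le_eqVlt => /orP[/eqP e|l]; first by exfalso; apply: ui; rewrite e.
  by rewrite -vi.
- split; last by split; [rewrite -uj -xj|rewrite -xj].
  have := Dv.2 j; rewrite le_eqVlt => /orP[/eqP e|l]; first by exfalso; apply: vj; rewrite e.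
  by rewrite -uj.
Qed.

Lemma noincl {R : realType} {d : nat} (V : set 'rV[R]_d) (p : 'rV[R]_d) v w :
  Ch V p -> ND V p -> Dset V p v -> Dset V p w ->
  Tset p v `<=` Tset p w -> Tset p v = Tset p w.
Proof.
move=> ch nd Dv Dw vw; apply/seteqP; split => // i wi; apply/not_notP => vi.
have [x [Dx xi xP]] := ch i.
have : ~ Tset p v `<=` Tset p x by move=> /(xP v Dv).
move=> /existsNP [j /not_implyP [vj xj]].
exact: (nd w v x i j Dw Dv Dx xi wi vi vj (vw j vj) xj).
Qed.
Arguments joinE {R d V p G}.
Arguments Tne {R d V p v}.
Arguments ND_of {R d V p}.
Arguments noincl {R d V p v w}.
Lemma private_coord {R : realType} {d : nat} (V : set 'rV[R]_d) (p v : 'rV[R]_d) :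
  surface V p -> Ch V p -> ND V p -> Dset V p v ->
  exists i, Tset p v i /\ forall u, Dset V p u -> Tset p u i -> Tset p u = Tset p v.
Proof.
move=> sf ch nd Dv; apply/not_notP => H.
have H' : forall i, Tset p v i ->
    exists u, [/\ Dset V p u, Tset p u i & Tset p u <> Tset p v].
  move=> i vi; apply/not_notP => nu; apply: H; exists i; split=> // u Du ui.
  by apply/not_notP => ne; apply: nu; exists u; split.
pose Tb u := finset.finset (fun j : 'I_d => coord p j == coord u j).
have TbP : forall u j, reflect (Tset p u j) (j \in Tb u).
  move=> u j; rewrite /Tb finset.in_set /Tset /=; exact: eqP.
have base : forall u, Dset V p u -> Tset p u <> Tset p v -> Tb v :\: Tb u = finset.set0 -> False.
  move=> u Du ne e; apply: ne; apply/esym; apply: noincl => // j vj.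
  apply/not_notP => uj.
  have : j \in Tb v :\: Tb u by rewrite finset.in_setD; apply/andP; split; [apply/negP => /TbP|apply/TbP].
  by rewrite e finset.in_set0.
have claim : forall n u, Dset V p u -> Tset p u <> Tset p v ->
    (#|Tb v :\: Tb u| <= n)%N -> False.
  elim=> [|n IH] u Du ne le.
    by apply: (base u Du ne); apply/eqP; rewrite -cards_eq0 -leqn0.
  have [e|[j jin]] := set_0Vmem (Tb v :\: Tb u); first exact: (base u Du ne e).
  move: (jin); rewrite finset.in_setD => /andP[/negP nuj /TbP vj].
  have {}nuj : ~ Tset p u j by move=> /TbP.
  have [w [Dw wj nw]] := H' j vj.
  apply: (IH w Dw nw).
  have pr : (Tb v :\: Tb w) \proper (Tb v :\: Tb u).
    apply/properP; split.
      apply/fintype.subsetP => i; rewrite !finset.in_setD => /andP[niw iv]; rewrite iv andbT.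
      apply/negP => /TbP ui.
      apply: (nd v u w j i Dv Du Dw wj vj nuj ui) => //.
        by apply/TbP.
      by move/TbP => wi; rewrite wi in niw.
    exists j => //; rewrite !finset.in_setD negb_and; apply/orP; left; rewrite negbK; exact/TbP.
  have := proper_card pr; move=> lt; rewrite -ltnS; exact: (leq_trans lt le).
have [i0 vi0] := Tne sf Dv.
have [u [Du ui0 nu]] := H' i0 vi0.
apply: (claim d u Du nu).
by apply: leq_trans (max_card _) _; rewrite card_ord.
Qed.
Arguments private_coord {R d V p v}.
Lemma mingenT {R : realType} {d : nat} (V : set 'rV[R]_d) (p : 'rV[R]_d) :
  surface V p -> Ch V p -> ND V p -> (exists v, Dset V p v) ->
  (forall i, exists2 v, Dset V p v & Tset p v i) ->
  forall G, G `<=` Dset V p ->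
  (min_gen G p <-> Transv (Dset V p) (fun a b => Tset p a = Tset p b) G).
Proof.
move=> sf ch nd [v0 Dv0] cov G GD; split.
  move=> [J M]; have [Gn cG] := (joinE GD).1 J.
  move=> y Dy; have [i [yi pri]] := private_coord sf ch nd Dy; split.
    have [g Gg gi] := cG i; exists g; split=> //.
    by rewrite (pri g (GD g Gg)) //; rewrite /Tset /= gi.
  move=> g g' Gg Gg' eg eg'; apply/not_notP => ne.
  have GD' : G `\ g' `<=` Dset V p by move=> x [Gx _]; apply: GD.
  apply: (M g' Gg'); apply/(joinE GD').2.
  split; first by exists g; split=> //; move=> /= e; apply: ne.
  move=> j; have [h Gh hj] := cG j.
  have [hg'|hg'] := pselect (h = g'); last by exists h.
  exists g; first by split=> // /= e; apply: ne.
  have : Tset p g j by rewrite -eg eg' -hg' /Tset /= hj.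
  by rewrite /Tset /= => ->.
move=> Tr; split.
  apply/(joinE GD).2; split.
    by have [[g [Gg _]] _] := Tr v0 Dv0; exists g.
  move=> i; have [v Dv vi] := cov i; have [[g [Gg eg]] _] := Tr v Dv.
  by exists g => //; move: vi; rewrite eg /Tset /= => ->.
move=> g Gg J; have [i [gi pri]] := private_coord sf ch nd (GD g Gg).
have [_ cG] := (joinE (fun x (Hx : (G `\ g) x) => GD x Hx.1)).1 J.
have [h [Gh nh] hi] := cG i.
have eh : Tset p h = Tset p g by apply: pri; [apply: GD|rewrite /Tset /= hi].
have [_ U] := Tr g (GD g Gg).
by apply: nh; rewrite /= (U h g Gh Gg) //; rewrite eh.
Qed.
Definition EP {T : Type} {k : nat} (P : 'I_k.+1 -> set T) (u w : T) :=
  exists l, P l u /\ P l w.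


Lemma part_cover {R : realType} {d : nat} {D : set 'rV[R]_d} {k} {P : 'I_k.+1 -> set 'rV[R]_d} :
  partition_of D P -> forall y, D y <-> exists l, P l y.
Proof.
move=> [_ _ cv] y; rewrite -cv; split.
  by move=> [l _ Pl]; exists l.
by move=> [l Pl]; exists l.
Qed.

Lemma part_disj {R : realType} {d : nat} {D : set 'rV[R]_d} {k} {P : 'I_k.+1 -> set 'rV[R]_d} :
  partition_of D P -> forall l m y, P l y -> P m y -> l = m.
Proof.
move=> [_ dj _] l m y Pl Pm; apply/eqP/negP => /negP /dj e.
by have : (P l `&` P m) y by []; rewrite e.
Qed.
Arguments part_disj {R d D k P} _ {l m y}.

Lemma EP_equiv {R : realType} {d : nat} {D : set 'rV[R]_d} {k} {P : 'I_k.+1 -> set 'rV[R]_d} :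
  partition_of D P ->
  [/\ forall x, D x -> EP P x x, forall x y, EP P x y -> EP P y x &
      forall x y z, EP P x y -> EP P y z -> EP P x z].
Proof.
move=> pa; split.
- by move=> x /(part_cover pa) [l Pl]; exists l.
- by move=> x y [l [a b]]; exists l.
- move=> x y z [l [a b]] [m [c e]]; exists l; split=> //.
  by rewrite (part_disj pa b c).
Qed.

Lemma transvP {R : realType} {d : nat} {D : set 'rV[R]_d} {k} {P : 'I_k.+1 -> set 'rV[R]_d} G :
  partition_of D P -> G `<=` D ->
  ((forall l, exists u, G `&` P l = [set u]) <-> Transv D (EP P) G).
Proof.
move=> pa GD; split.
  move=> Hg y /(part_cover pa) [l Pl]; have [u Hu] := Hg l.
  have [Gu Plu] : (G `&` P l) u by rewrite Hu.
  split; first by exists u; split=> //; exists l.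
  have key : forall g, G g -> EP P y g -> g = u.
    move=> g Gg [m [Pmy Pmg]]; have ml := part_disj pa Pmy Pl; subst m.
    have : (G `&` P l) g by split.
    by rewrite Hu.
    
  by move=> g g' Gg Gg' eg eg'; rewrite (key g Gg eg) (key g' Gg' eg').
move=> Tr l; have [ne _ _] := pa; have [y0 Py0] := ne l.
have Dy0 : D y0 by apply/(part_cover pa); exists l.
have [[g [Gg [m [Pmy Pmg]]]] U] := Tr y0 Dy0.
have ml := part_disj pa Pmy Py0; subst m.
exists g; apply/seteqP; split.
  move=> x [Gx Plx]; apply: (U x g Gx Gg); by exists l.
by move=> x ->; split.
Qed.
Arguments transvP {R d D k P G}.
Lemma Ch_of_part {R : realType} {d : nat} (V : set 'rV[R]_d) (p : 'rV[R]_d) k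
  (P : 'I_k.+1 -> set 'rV[R]_d) :
  partition_of (Dset V p) P ->
  (forall G, G `<=` Dset V p -> (min_gen G p <-> Transv (Dset V p) (EP P) G)) ->
  Ch V p.
Proof.
move=> pa HQ.
have [Er Es Et] := EP_equiv pa.
have sep : forall u x, Dset V p u -> Dset V p x -> ~ EP P u x ->
    Tset p u `<=` Tset p x -> False.
  move=> u x Du Dx nE ux.
  have [G [GD Gu Gx TG]] := @transv_build _ (Dset V p) (EP P) Er Es Et u x Du Dx.
  have [J M] := (HQ G GD).2 TG.
  apply: (M u Gu).
  have GD' : G `\ u `<=` Dset V p by move=> y [Gy _]; apply: GD.
  have [_ cG] := (joinE GD).1 J.
  apply/(joinE GD').2; split.
    exists x; split; first exact: Gx.
    by move=> /= e; apply: nE; rewrite -e; apply: Er.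
  move=> i; have [h Gh hi] := cG i.
  have [hu|hu] := pselect (h = u); last by exists h.
  exists x; first by split; [apply: Gx|move=> /= e; apply: nE; rewrite -e; apply: Er].
  have : Tset p x i by apply: ux; rewrite -hu /Tset /= hi.
  by rewrite /Tset /= => ->.
move=> i.
have [[l Hl]|nH] := pselect (exists l, forall y, P l y -> Tset p y i).
  have [ne _ _] := pa; have [x Px] := ne l.
  have Dx : Dset V p x by apply/(part_cover pa); exists l.
  exists x; split=> //; first exact: Hl.
  move=> u Du ux.
  have [[m [Pmu Pmx]]|nE] := pselect (EP P u x).
    by have ml := part_disj pa Pmx Px; subst m; apply: Hl.
  by exfalso; apply: (sep u x Du Dx nE ux).
exfalso.
have : forall l, exists y, P l y /\ ~ Tset p y i.
  move=> l; apply/not_notP => H; apply: nH; exists l => y Py.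
  by apply/not_notP => ny; apply: H; exists y.
move=> /choice [h Hh].
pose G := [set y | exists l, y = h l].
have GD : G `<=` Dset V p.
  by move=> y [l ->]; apply/(part_cover pa); exists l; exact: (Hh l).1.
have TG : Transv (Dset V p) (EP P) G.
  apply/(transvP pa GD) => l; exists (h l); apply/seteqP; split.
    move=> y [[m ->] Py]; have ml := part_disj pa (Hh m).1 Py; subst m => //.
  by move=> y ->; split; [exists l|exact: (Hh l).1].
have [J _] := (HQ G GD).2 TG.
have [_ cG] := (joinE GD).1 J.
have [y [m ->] hi] := cG i.
by apply: (Hh m).2; rewrite /Tset /= hi.
Qed.
Lemma pos_lb {R : realType} (s : seq R) :
  exists2 e : R, 0 < e & forall x, x \in s -> 0 < x -> e <= x.
Proof.
elim: s => [|a s [e e0 He]]; first by exists 1 => //.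
have [a0|a0] := ltrP 0 a.
  exists (Num.min e a); first by rewrite lt_min e0 a0.
  move=> x; rewrite in_cons => /orP[/eqP ->|xs] x0; rewrite ge_min.
    by rewrite lexx orbT.
  by rewrite He.
exists e => // x; rewrite in_cons => /orP[/eqP ->|xs] x0; last exact: He.
by exfalso; move: a0; rewrite leNgt x0.
Qed.

Lemma gap2 {R : realType} {d : nat} (V : set 'rV[R]_d) (p : 'rV[R]_d) :
  finite_set V -> exists2 g : R, 0 < g & forall w, V w -> forall j,
    (coord p j < coord w j -> coord p j + g <= coord w j) /\
    (coord w j < coord p j -> coord w j + g <= coord p j).
Proof.
move=> /finite_seqP [s Vs].
have [g g0 Hg] := pos_lb [seq `|coord w j - coord p j| | w <- s, j <- enum 'I_d].
have H : forall w, V w -> forall j, coord w j != coord p j ->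
    g <= `|coord w j - coord p j|.
  move=> w Vw j ne; apply: Hg.
    apply: allpairs_f; last by rewrite mem_enum.
    by move: Vw; rewrite Vs.
  by rewrite normr_gt0 subr_eq0.
exists g => // w Vw j; split=> lt.
  have := H w Vw j; rewrite gt_eqF // => /(_ isT).
  rewrite gtr0_norm ?subr_gt0 //; lra.
have := H w Vw j; rewrite lt_eqF // => /(_ isT).
rewrite ltr0_norm ?subr_lt0 //; lra.
Qed.
Lemma ball_coord {R : realType} {d : nat} (p q : 'rV[R]_d) e :
  ball p e q -> forall j, coord p j - e < coord q j < coord p j + e.
Proof. move=> [_ H] j; have := H ord0 j; rewrite /ball /= ltr_distlC; exact. Qed.

Lemma Ch_char {R : realType} {d : nat} (V : set 'rV[R]_d) (p : 'rV[R]_d) :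
  finite_set V -> surface V p -> Ch V p -> characteristic V p.
Proof.
move=> fin sf ch; split=> // i.
have [x [[Vx xp] xi xP]] := ch i.
exists (Fflat V i x); first by exists x.
move=> B /nbhs_ballP [e /= e0 eB].
have [g g0 Hg] := gap2 V p fin.
pose eps := Num.min (e / 2) (g / 2).
have eps0 : 0 < eps by rewrite lt_min !divr_gt0.
have [epse epsg] : eps <= e / 2 /\ eps <= g / 2 by split; rewrite ge_min lexx ?orbT.
pose q : 'rV[R]_d := \row_j (if (j != i) && (coord p j == coord x j)
                             then coord p j + eps else coord p j).
have qc : forall j, coord q j = (if (j != i) && (coord p j == coord x j)
                             then coord p j + eps else coord p j).
  by move=> j; rewrite /coord mxE.
have pq : forall j, coord p j <= coord q j.
  by move=> j; rewrite qc; case: ifP => _; lra.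
have qi : coord q i = coord p i by rewrite qc eqxx.
exists q; split; last first.
  apply: eB; split=> // a b; rewrite ord1 /ball /=.
  change (`|coord p b - coord q b| < e); rewrite qc; case: ifP => _.
    rewrite opprD addrA subrr add0r normrN gtr0_norm //; lra.
  by rewrite subrr normr0.
exists x; first exact: rt_refl.
split; last first.
  split; first by rewrite qi xi.
  move=> j ji; rewrite qc ji /=; case: eqP => e1.
    by rewrite -e1; lra.
  have := xp j; rewrite le_eqVlt => /orP[/eqP e2|//]; by exfalso; apply: e1.
split; first by exists x => // j; exact: le_trans (xp j) (pq j).
move=> [w Vw sw].
have [Dw|nDw] := pselect (dle w p).
  have wx : Tset p w `<=` Tset p x.
    move=> j /= wj; have := sw j; rewrite qc; case: ifP.
      by move=> /andP[_ /eqP].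
    by rewrite wj ltxx.
  have := xP w (conj Vw Dw) wx; rewrite /Tset /= => wi.
  by have := sw i; rewrite qi wi ltxx.
have [j nj] : exists j, ~ coord w j <= coord p j.
  by apply/not_notP => H; apply: nDw => j; apply/not_notP => H'; apply: H; exists j.
have lt : coord p j < coord w j by rewrite ltNge; apply/negP.
have := (Hg w Vw j).1 lt; have := sw j; rewrite qc; case: ifP => _; lra.
Qed.

Lemma crt_V {R : realType} {d : nat} (V : set 'rV[R]_d) i x w :
  clos_refl_trans _ (sim_i V i) x w -> V x -> V w.
Proof. by elim=> [a b [_ []]|//|a b c _ IH1 _ IH2] // /IH1 /IH2. Qed.
Arguments crt_V {R d V i x w}.
Arguments ball_coord {R d p q e}.

Lemma char_Ch {R : realType} {d : nat} (V : set 'rV[R]_d) (p : 'rV[R]_d) :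
  finite_set V -> characteristic V p -> Ch V p.
Proof.
move=> fin [sf chF] i.
have [F [x0 Vx0 ->] Fp] := chF i.
have [g g0 Hg] := gap2 V p fin.
have [q [[w cw [sfq [qwi qwj]]] bq]] := Fp _ (nbhsx_ballx p g g0).
have Vw := crt_V cw Vx0.
have bc := ball_coord bq.
have wq : forall j, coord w j <= coord q j.
  move=> j; have [->|ji] := eqVneq j i; first by rewrite qwi.
  exact: ltW (qwj j ji).
have Dw : Dset V p w.
  split=> // j; rewrite leNgt; apply/negP => lt.
  have := (Hg w Vw j).1 lt; have := bc j; have := wq j; lra.
have wi : Tset p w i.
  rewrite /Tset /=; apply/eqP; rewrite eq_le (Dw.2 i) andbT.
  rewrite leNgt; apply/negP => lt.
  have := (Hg w Vw i).2 lt; have := bc i; rewrite qwi; lra.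
exists w; split=> // u [Vu up] uw.
apply/not_notP => ui; apply: sfq.2; exists u => // j.
have [->|ji] := eqVneq j i.
  have lt : coord u i < coord p i.
    by rewrite lt_neqAle up andbT; apply/eqP => e; apply: ui; rewrite /Tset /= e.
  have := (Hg u Vu i).2 lt; have := bc i; lra.
have [e|ne] := eqVneq (coord p j) (coord u j).
  have := uw j; rewrite /Tset /= => /(_ e) e2.
  by rewrite -e e2; exact: qwj.
have lt : coord u j < coord p j by rewrite lt_neqAle up andbT eq_sym.
have := (Hg u Vu j).2 lt; have := bc j; lra.
Qed.
Lemma transv_ext {T : Type} (D : set T) (E1 E2 : T -> T -> Prop) G :
  (forall y g, D y -> D g -> (E1 y g <-> E2 y g)) -> G `<=` D ->
  (Transv D E1 G <-> Transv D E2 G).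
Proof.
move=> HE GD.
have A : forall E E' : T -> T -> Prop,
    (forall y g, D y -> D g -> E y g -> E' y g) ->
    (forall y g, D y -> D g -> E' y g -> E y g) ->
    Transv D E G -> Transv D E' G.
  move=> E E' h1 h2 Tr y Dy; have [[g [Gg Eg]] U] := Tr y Dy; split.
    by exists g; split=> //; apply: (h1 _ _ Dy (GD _ Gg) Eg).
  move=> a b Ga Gb Ea Eb; apply: (U a b Ga Gb).
    exact: (h2 _ _ Dy (GD _ Ga) Ea).
  exact: (h2 _ _ Dy (GD _ Gb) Eb).
split; apply: A => y g Dy Dg; by case: (HE y g Dy Dg).
Qed.

Theorem corollary4p8 (R : realType) (d : nat) (V : set 'rV[R]_d) (k : nat)
    (p : 'rV[R]_d) :
  finite_set V -> antichain V -> ~ degenerate V -> generated V p ->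
  (char_rank V p k <-> exists P : 'I_k.+1 -> set 'rV[R]_d, gen_partition V p P) /\
  (char_rank V p k ->
     forall P : 'I_k.+1 -> set 'rV[R]_d, gen_partition V p P ->
     forall u w, Dset V p u -> Dset V p w ->
       ((exists l, P l u /\ P l w) <-> Tset p u = Tset p w)).
Proof.
move=> fin _ ndeg [sf [G0 G0V J0]].
pose D := Dset V p.
have G0D : G0 `<=` D.
  by move=> v Gv; split; [exact: G0V|move=> i; exact: ((J0.2 i).1 v Gv)].
have [[v0 Gv0] cov0] := (joinE G0D).1 J0.
have Dv0 : D v0 by apply: G0D.
have cov : forall i, exists2 v, D v & Tset p v i.
  by move=> i; have [v Gv e] := cov0 i; exists v; [apply: G0D|rewrite /Tset /= e].
have minV : forall G, G `<=` V -> min_gen G p -> G `<=` D.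
  move=> G GV [J _] v Gv; split; [exact: GV|move=> i; exact: ((J.2 i).1 v Gv)].
pose ET := fun a b : 'rV[R]_d => Tset p a = Tset p b.
have HT : char_rank V p k -> forall G, G `<=` D -> (min_gen G p <-> Transv D ET G).
  move=> chr G GD; have [chp _] := chr.
  exact: (@mingenT _ _ V p sf (char_Ch V p fin chp) (ND_of chp ndeg)
     (ex_intro _ v0 Dv0) cov G GD).
have HP : forall P : 'I_k.+1 -> set 'rV[R]_d, gen_partition V p P ->
    forall G, G `<=` D -> (min_gen G p <-> Transv D (EP P) G).
  move=> P [pa hp] G GD; rewrite (hp G GD); exact: transvP.
have ETeq : [/\ forall x, D x -> ET x x, forall x y, ET x y -> ET y x &
      forall x y z, ET x y -> ET y z -> ET x z].
  by split; [move=> x|move=> x y /esym|move=> x y z; apply: etrans].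
split; last first.
  move=> chr P gp u w Du Dw.
  have pa := gp.1; have [Er Es Et] := EP_equiv pa.
  have [Tr Ts Tt] := ETeq.
  split.
    apply: (@same_class _ D (EP P) ET Tr Ts Tt Er) => // G GD TG.
    by apply/(HP P gp G GD); apply/(HT chr G GD).
  apply: (@same_class _ D ET (EP P) Er Es Et Tr) => // G GD TG.
  by apply/(HT chr G GD); apply/(HP P gp G GD).
split.
  move=> chr; have [chp [[G1 [G1V mg1]] cards]] := chr.
  have G1D := minV G1 G1V mg1.
  have TG1 := (HT chr G1 G1D).1 mg1.
  have /card_esym/card_set_bijP [f [ffun finj fsurj]] := cards G1 G1V mg1.
  have fG : forall l : 'I_k.+1, G1 (f l) by move=> l; apply: ffun; exact: ltn_ord.
  pose P := fun l : 'I_k.+1 => [set y | D y /\ Tset p y = Tset p (f l)].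
  have pa : partition_of D P.
    split.
    - by move=> l; exists (f l); split=> //; apply: G1D.
    - move=> l m lm; apply/seteqP; split=> [y [[Dy el] [_ em]]|//].
      have [_ U] := TG1 y Dy.
      have e := U _ _ (fG l) (fG m) el em.
      have mem : forall l : 'I_k.+1, (val l) \in `I_k.+1.
        by move=> l'; rewrite inE /=; exact: ltn_ord.
      have : val l = val m by apply: finj; [exact: mem|exact: mem|exact: e].
      by move/val_inj => e2; rewrite e2 eqxx in lm.
    - apply/seteqP; split=> [y [l _ [Dy _]] //|y Dy].
      have [[g [Gg Eg]] _] := TG1 y Dy.
      have [n nk fn] := fsurj g Gg.
      by exists (Ordinal nk) => //; split=> //; rewrite Eg -fn.
  exists P; split=> // G GD.
  rewrite (HT chr G GD) (transvP pa GD).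
  apply: transv_ext => // y g Dy Dg; split.
    move=> e; have := (part_cover pa y).1 Dy; move=> [l [_ el]].
    by exists l; split; split=> //; rewrite -el -e.
  by move=> [l [[_ a] [_ b]]]; rewrite /ET a b.
move=> [P gp]; have [pa hp] := gp.
have HP' := HP P gp.
have ch := @Ch_of_part _ _ V p k P pa HP'.
have [Er Es Et] := EP_equiv pa.
split; first exact: (Ch_char V p fin sf ch).
split.
  have [G [GD Gu _ TG]] := @transv_build _ D (EP P) Er Es Et v0 v0 Dv0 Dv0.
  exists G; split; first by move=> y /GD [].
  exact/(HP' G GD).
move=> G GV mg; have GD := minV G GV mg.
have /choice [h Hh] := (hp G GD).1 mg.
have hP : forall l, G (h l) /\ P l (h l).
  by move=> l; have : (G `&` P l) (h l) by rewrite Hh.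
apply/card_esym/card_set_bijP; exists (fun n => h (inord n)); split.
- by move=> n _; exact: (hP _).1.
- move=> n m; rewrite !inE /= => nk mk e.
  have Pm : P (inord m) (h (inord n)) by rewrite e; exact: (hP _).2.
  have := part_disj pa (hP (inord n)).2 Pm => /(congr1 val).
  by rewrite /= !inordK.
- move=> g Gg; have [l Pl] := (part_cover pa g).1 (GD g Gg).
  have : (G `&` P l) g by [].
  rewrite Hh => ->; exists (val l); first exact: ltn_ord.
  by rewrite inord_val.
Qed.
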